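(* As Laurent series in $z$, $$\sum_{n\ge0}\binom{2n}{n}z^n=\left(9\frac{1+z}{1-z}+3\right)\Psi(-z)-(4z+8)\Psi^3(-z)-\left(12z^2+12z+3\right)\Psi^5(-z)\quad\text{modulo }27.$$
   Context: $\Psi(z)=\prod_{j\ge0}(1+z^{3^j})$, so $\Psi(-z)=\prod_{j\ge0}(1-z^{3^j})$. Rational functions are expanded as power series in $z$; ''modulo $27$'' means coefficientwise congruence. *)

(* Defs.v *)
From mathcomp Require Import all_boot all_order all_algebra.
Set Implicit Arguments. Unset Strict Implicit. Unset Printing Implicit Defensive.
Import GRing.Theory.
Local Open Scope ring_scope.

Definition series := nat -> int.

Definition sconst (c : int) : series := fun n => if n == 0%N then c else 0.
Definition spoly (p : {poly int}) : series := fun n => p`_n.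
Definition sadd (f g : series) : series := fun n => f n + g n.
Definition ssub (f g : series) : series := fun n => f n - g n.
Definition sscale (c : int) (f : series) : series := fun n => c * f n.
Definition smul (f g : series) : series :=
  fun n => \sum_(i < n.+1) f i * g (n - i)%N.
Definition spow (f : series) (k : nat) : series := iter k (smul f) (sconst 1).

(* 1/(1-z) = sum_{n>=0} z^n *)
Definition sgeom : series := fun _ => 1.

(* Psi(-z) = prod_{j>=0} (1 - z^(3^j)); the coefficient of z^n only depends on
   the factors with 3^j <= n, all of which occur among j < n+1. *)
Definition Psi_neg : series :=
  fun n => (\prod_(j < n.+1) (1 - 'X^(3 ^ j)) : {poly int})`_n.

Definition central_binom : series := fun n => ('C(n.*2, n))%:Z.

Definition rhs12 : series :=
  ssub (ssub
    (smul (sadd (sscale 9 (smul (spoly (1 + 'X)) sgeom)) (sconst 3)) Psi_neg)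
    (smul (spoly (4 *: 'X + 8%:P)) (spow Psi_neg 3)))
    (smul (spoly (12 *: 'X^2 + 12 *: 'X + 3%:P)) (spow Psi_neg 5)).

(* Main.v *)
Require Import Defs.
From mathcomp Require Import all_boot all_order all_algebra.
From mathcomp Require Import ring zify.
Unset Printing Implicit Defensive.
Import GRing.Theory.
Local Open Scope ring_scope.


Notation Z27 := 'Z_27.
Definition small (N : nat) (p : {poly Z27}) := forall k, (k <= N)%N -> p`_k = 0.

Lemma small0 N : small N 0.
Proof. by move=> k _; rewrite coef0. Qed.
Lemma smallD N p q : small N p -> small N q -> small N (p + q).
Proof. by move=> hp hq k hk; rewrite coefD hp // hq // addr0. Qed.
Lemma smallN N p : small N p -> small N (- p).
Proof. by move=> hp k hk; rewrite coefN hp // oppr0. Qed.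
Lemma smallB N p q : small N p -> small N q -> small N (p - q).
Proof. by move=> hp hq; apply: smallD => //; apply: smallN. Qed.
Lemma smallMl N p q : small N p -> small N (q * p).
Proof.
move=> hp k hk; rewrite coefM big1 // => i _.
by rewrite hp ?mulr0 // (leq_trans (leq_subr _ _) hk).
Qed.
Lemma smallMr N p q : small N p -> small N (p * q).
Proof. by move=> hp; rewrite mulrC; apply: smallMl. Qed.
Lemma smallXn N m : (N < m)%N -> small N 'X^m.
Proof.
move=> hm k hk; rewrite coefXn; case: eqP => // ek.
by move: hm; rewrite -ek ltnNge hk.
Qed.

Lemma small_cancel N (u d : {poly Z27}) (a : Z27) :
  a * u`_0 = 1 -> small N (u * d) -> small N d.
Proof.
move=> ha hud.
suff H : forall k, (k <= N)%N -> forall j, (j <= k)%N -> d`_j = 0.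
  by move=> k hk; apply: (H k hk k).
elim=> [|k IH] hk j hj.
  move: hj; rewrite leqn0 => /eqP ->.
  have := hud 0%N hk; rewrite coef0M => h.
  by rewrite -[d`_0]mul1r -ha -mulrA h mulr0.
rewrite leq_eqVlt in hj; case/orP: hj => [/eqP ->|hj]; last first.
  by apply: IH => //; apply: ltnW.
have := hud k.+1 hk; rewrite coefM big_ord_recl /= big1 ?addr0.
  by rewrite subn0 => h; rewrite -[d`_k.+1]mul1r -ha -mulrA h mulr0.
move=> i _; rewrite IH ?mulr0 //; first by apply: ltnW.
by rewrite /bump /= add1n subSS leq_subr.
Qed.


Definition phi N (f : series) : {poly Z27} := \poly_(i < N.+1) ((f i)%:~R : Z27).
Definition eqN N (p q : {poly Z27}) := small N (p - q).

Lemma phi_coef N f k : (k <= N)%N -> (phi N f)`_k = (f k)%:~R.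
Proof. by move=> hk; rewrite coef_poly ltnS hk. Qed.

Lemma eqN_refl N p : eqN N p p.
Proof. by rewrite /eqN subrr; apply: small0. Qed.
Lemma eqN_sym N p q : eqN N p q -> eqN N q p.
Proof. by move=> h; rewrite /eqN -opprB; apply: smallN. Qed.
Lemma eqN_trans N p q r : eqN N p q -> eqN N q r -> eqN N p r.
Proof. by move=> h1 h2; have := smallD N _ _ h1 h2; rewrite /eqN addrA subrK. Qed.
Lemma eqN_add N p q p' q' : eqN N p p' -> eqN N q q' -> eqN N (p + q) (p' + q').
Proof. move=> h1 h2; have := smallD N _ _ h1 h2; rewrite /eqN. by have -> : p + q - (p' + q') = p - p' + (q - q') by ring. Qed.
Lemma eqN_opp N p p' : eqN N p p' -> eqN N (- p) (- p').
Proof. move=> h1; have := smallN N _ h1; rewrite /eqN. by have -> : - p - - p' = - (p - p') by ring. Qed.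
Lemma eqN_sub N p q p' q' : eqN N p p' -> eqN N q q' -> eqN N (p - q) (p' - q').
Proof. by move=> h1 h2; apply: eqN_add => //; apply: eqN_opp. Qed.
Lemma eqN_mul N p q p' q' : eqN N p p' -> eqN N q q' -> eqN N (p * q) (p' * q').
Proof.
move=> h1 h2; have := smallD N _ _ (smallMr N _ q h1) (smallMl N _ p' h2); rewrite /eqN.
by have -> : p * q - p' * q' = (p - p') * q + p' * (q - q') by ring.
Qed.
Lemma eqN_exp N p p' k : eqN N p p' -> eqN N (p ^+ k) (p' ^+ k).
Proof. by move=> h; elim: k => [|k IH]; [apply: eqN_refl | rewrite !exprS; apply: eqN_mul]. Qed.

Lemma phi_smul N f g : eqN N (phi N (smul f g)) (phi N f * phi N g).
Proof.
move=> k hk; rewrite coefB coefM phi_coef // /smul rmorph_sum /=; apply/eqP; rewrite subr_eq0.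
apply/eqP/eq_bigr => i _; rewrite rmorphM /= !phi_coef //.
  by rewrite (leq_trans (leq_subr _ _) hk).
by rewrite (leq_trans _ hk) // -ltnS.
Qed.
Lemma phi_sadd N f g : eqN N (phi N (sadd f g)) (phi N f + phi N g).
Proof. by move=> k hk; rewrite coefB coefD !phi_coef // rmorphD subrr. Qed.
Lemma phi_ssub N f g : eqN N (phi N (ssub f g)) (phi N f - phi N g).
Proof. by move=> k hk; rewrite coefB coefB !phi_coef // rmorphB subrr. Qed.
Lemma phi_sscale N c f : eqN N (phi N (sscale c f)) ((c%:~R : Z27)%:P * phi N f).
Proof. by move=> k hk; rewrite coefB coefCM !phi_coef // rmorphM subrr. Qed.
Lemma phi_sconst N c : eqN N (phi N (sconst c)) ((c%:~R : Z27)%:P).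
Proof.
move=> k hk; rewrite coefB coefC !phi_coef // /sconst.
by case: (k == 0%N); rewrite ?subrr // mul0rz subrr.
Qed.
Lemma phi_spoly N p : eqN N (phi N (spoly p)) (map_poly (fun x : int => (x%:~R : Z27)) p).
Proof. by move=> k hk; rewrite coefB coef_map /= !phi_coef // subrr. Qed.
Lemma phi_spow N f k : eqN N (phi N (spow f k)) (phi N f ^+ k).
Proof.
elim: k => [|k IH].
  rewrite expr0 /spow /=; apply: eqN_trans (phi_sconst N 1) _; rewrite rmorph1; apply: eqN_refl.
rewrite exprS /spow iterS -/(spow f k); apply: eqN_trans (phi_smul _ _ _) _.
by apply: eqN_mul => //; apply: eqN_refl.
Qed.


Lemma binom_rec m : (m.+1 * 'C(m.+1.*2, m.+1) = 'C(m.*2, m) * (4 * m + 2))%N.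
Proof.
have h1 := mul_bin_diag (m.*2.+2) m.
have h2 := mul_bin_diag (m.*2.+1) m.
have e : 'C(m.*2.+1, m.+1) = 'C(m.*2.+1, m).
  have := @bin_sub (m.*2.+1) m ltac:(lia). 
  have -> : (m.*2.+1 - m = m.+1)%N by lia. done.
rewrite e /= in h2; rewrite /= in h1.
have -> : m.+1.*2 = m.*2.+2 by lia.
nia.
Qed.

Definition cpol N : {poly int} := \poly_(i < N.+1) ('C(i.*2, i))%:Z.

Lemma cpol_coef N k : (k <= N)%N -> (cpol N)`_k = ('C(k.*2, k))%:Z.
Proof. by move=> hk; rewrite coef_poly ltnS hk. Qed.

Definition Tpol N := (cpol N)^`() - 'X * (cpol N)^`() *+ 4 - cpol N *+ 2.

Lemma Tpol_coef N k : (k < N)%N -> (Tpol N)`_k = 0.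
Proof.
move=> hk; rewrite /Tpol !coefB coefMn coefXM coefMn coef_deriv.
case: k hk => [|k] hk /=.
  rewrite !cpol_coef //; lia.
rewrite coef_deriv !cpol_coef; try lia.
have := binom_rec k.+1 => h.
lia.
Qed.

Definition Dpol N := (1 - 'X *+ 4) * cpol N ^+ 2.

Lemma Dpol_deriv N : (Dpol N)^`() = (cpol N * Tpol N) *+ 2.
Proof.
rewrite /Dpol /Tpol derivM derivB derivMn derivX expr2 derivM.
have -> : (1 : {poly int})^`() = 0 by rewrite -polyC1 derivC.
set c := cpol N; set c' := c^`().
ring.
Qed.

Lemma Dpol_coef N k : (k <= N)%N -> (Dpol N)`_k = (k == 0%N)%:R.
Proof.
case: k => [|k] hk.
  rewrite /Dpol coef0M coefB coef1 coefMn coefX /= expr2 coef0M cpol_coef //.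
have := congr1 (fun p : {poly int} => p`_k) (Dpol_deriv N).
rewrite coef_deriv coefMn coefM big1 ?mul0rn.
  by move/eqP; rewrite Num.Theory.mulrn_eq0 /= => /eqP.
move=> i _; rewrite Tpol_coef ?mulr0 //.
have := ltn_ord i; lia.
Qed.


Definition Qp J : {poly int} := \prod_(j < J) (1 - 'X^(3 ^ j)).

Lemma QpS J : Qp J.+1 = Qp J * (1 - 'X^(3 ^ J)).
Proof. by rewrite /Qp big_ord_recr. Qed.

Lemma Qp_rel J : exists E : {poly int}, (1 - 'X) * Qp J ^+ 2 = 1 - 'X^(3 ^ J) + E *+ 3.
Proof.
elim: J => [|J [E IH]].
  by exists 0; rewrite /Qp big_ord0 expn0 expr1n mulr1 mul0rn addr0.
exists ('X^(3 ^ J) ^+ 2 - 'X^(3 ^ J) + E * (1 - 'X^(3 ^ J)) ^+ 2).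
rewrite QpS expnS mulnC exprM.
move: IH; move: ('X^(3 ^ J)) => y IH.
have -> : (1 - 'X) * (Qp J * (1 - y)) ^+ 2 = ((1 - 'X) * Qp J ^+ 2) * (1 - y) ^+ 2 by ring.
rewrite IH; ring.
Qed.

Lemma Qp_coef_succ k J : (k < 3 ^ J)%N -> (Qp J.+1)`_k = (Qp J)`_k.
Proof.
move=> hk; rewrite QpS mulrBr mulr1 coefB coefMXn hk subr0 //.
Qed.

Lemma Qp_stable k J : (k < J)%N -> (Qp J)`_k = (Qp k.+1)`_k.
Proof.
elim: J => [//|J IH] hk.
rewrite leq_eqVlt in hk; case/orP: hk => [/eqP -> //|hk].
rewrite Qp_coef_succ ?IH //.
have := @ltn_expl 3 J isT; lia.
Qed.

Lemma Psi_coef k N : (k <= N)%N -> Psi_neg k = (Qp N.+1)`_k.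
Proof. by move=> hk; rewrite Qp_stable. Qed.

Lemma Qp_coef0 J : (Qp J.+1)`_0 = 1.
Proof.
rewrite Qp_stable // /Qp big_ord1 coefB coef1 coefXn /=.
by rewrite subr0.
Qed.


Lemma key (T : comNzRingType) (X e G P R : T) :
  let w := 1 - X in let V := 1 + 3%:R * e in
  let B := 4%:R * X + 8%:R in let C := 12%:R * X ^+ 2 + 12%:R * X + 3%:R in
  let s1 := w * G - 1 in let s2 := w * P ^+ 2 - V in
  let s3 := R - ((9%:R * (1 + X) * G + 3%:R) * P - B * P ^+ 3 - C * P ^+ 5) in
  let num := 9%:R * (1 + X) * w + 3%:R * w ^+ 2 - B * V * w - C * V ^+ 2 in
  let Tt := P * (9%:R * (1 + X) * w * s1 - B * w * s2 - C * s2 * (2%:R * V + s2)) + w ^+ 2 * s3 in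
  w ^+ 5 * ((1 - 4%:R * X) * R ^+ 2 - 1) =
  27%:R * (- 3%:R * X^+0 * e^+1 + 54%:R * X^+0 * e^+2 + 274%:R * X^+0 * e^+3 + 279%:R * X^+0 * e^+4 + 81%:R * X^+0 * e^+5 - 1%:R * X^+1 * e^+0 + 48%:R * X^+1 * e^+1 + 108%:R * X^+1 * e^+2 - 20%:R * X^+1 * e^+3 + 468%:R * X^+1 * e^+4 + 324%:R * X^+1 * e^+5 + 10%:R * X^+2 * e^+0 - 24%:R * X^+2 * e^+1 - 540%:R * X^+2 * e^+2 - 2012%:R * X^+2 * e^+3 - 2880%:R * X^+2 * e^+4 - 648%:R * X^+2 * e^+5 - 10%:R * X^+3 * e^+0 - 312%:R * X^+3 * e^+1 - 2160%:R * X^+3 * e^+2 - 6736%:R * X^+3 * e^+3 - 10080%:R * X^+3 * e^+4 - 5184%:R * X^+3 * e^+5 - 51%:R * X^+4 * e^+0 - 588%:R * X^+4 * e^+1 - 3024%:R * X^+4 * e^+2 - 8512%:R * X^+4 * e^+3 - 13104%:R * X^+4 * e^+4 - 9072%:R * X^+4 * e^+5 - 29%:R * X^+5 * e^+0 - 336%:R * X^+5 * e^+1 - 1728%:R * X^+5 * e^+2 - 4864%:R * X^+5 * e^+3 - 7488%:R * X^+5 * e^+4 - 5184%:R * X^+5 * e^+5) + (1 - 4%:R * X) * (s2 * num ^+ 2 + w * Tt * (2%:R * P * num + Tt)).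
Proof. move=> w V B C s1 s2 s3 num Tt. rewrite /Tt /num /s3 /s2 /s1 /C /B /V /w. ring. Qed.


Notation im := (map_poly (fun x : int => (x%:~R : Z27))).

Lemma z27 : (27%:R : Z27) = 0. Proof. by apply: val_inj. Qed.
Lemma z14 : (14%:R * 2%:R : Z27) = 1. Proof. by apply: val_inj. Qed.
Lemma natr27 m : (m%:R : Z27) = 0 -> (27 %| m)%N.
Proof. rewrite Zp_nat => /(congr1 val) /= H. by rewrite /dvdn H. Qed.
Lemma intr27 (x : int) : (x%:~R : Z27) = 0 -> (27 %| x)%Z.
Proof.
case: x => m.
  by rewrite pmulrn => /natr27.
rewrite NegzE mulrNz pmulrn => /eqP; rewrite oppr_eq0 => /eqP /natr27.
by rewrite /dvdz.
Qed.
Lemma final_step (a b : int) : (a%:~R : Z27) = b%:~R -> (a = b %[mod 27])%Z.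
Proof. by move=> h; apply/eqP; rewrite eqz_mod_dvd; apply: intr27; rewrite rmorphB /= h subrr. Qed.

Lemma HC N : small N ((1 - 4%:R * 'X) * (im (cpol N)) ^+ 2 - 1).
Proof.
have -> : (1 - 4%:R * 'X) * (im (cpol N)) ^+ 2 = im (Dpol N).
  by rewrite /Dpol rmorphM rmorphB rmorph1 rmorphMn /= map_polyX rmorphXn /= mulr_natl.
move=> k hk; rewrite coefB coef_map /= Dpol_coef // coef1.
by case: (k == 0%N); rewrite ?subrr // mul0rz subrr.
Qed.

Lemma HG N : small N ((1 - 'X) * phi N sgeom - 1).
Proof.
move=> k hk; rewrite mulrBl mul1r !coefB coefXM coef1 phi_coef //.
case: k hk => [|k] hk /=; first by rewrite subr0 subrr.
by rewrite phi_coef ?subrr ?subr0 //; apply: ltnW.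
Qed.

Lemma eqN_eq N p q : p = q -> eqN N p q.
Proof. by move=> ->; apply: eqN_refl. Qed.

Lemma HP N : eqN N (phi N Psi_neg) (im (Qp N.+1)).
Proof. by move=> k hk; rewrite coefB coef_map phi_coef // (Psi_coef k N hk) /= subrr. Qed.

Lemma HPrel N : exists e, small N ((1 - 'X) * (im (Qp N.+1)) ^+ 2 - (1 + 3%:R * e)).
Proof.
case: (Qp_rel N.+1) => E hE; exists (im E).
have -> : (1 - 'X) * im (Qp N.+1) ^+ 2 = im ((1 - 'X) * Qp N.+1 ^+ 2).
  by rewrite rmorphM rmorphB rmorph1 /= map_polyX rmorphXn.
rewrite hE rmorphD rmorphB rmorph1 rmorphMn /= map_polyXn mulr_natl.
move: (im E) => e.
have E2 : forall y : {poly Z27}, 1 - y + e *+ 3 - (1 + e *+ 3) = - y by move=> y; ring.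
rewrite E2.
apply: smallN; apply: smallXn.
have := @ltn_expl 3 N.+1 isT; lia.
Qed.

Lemma im_lin1 (a c : int) : im (a *: 'X + c%:P) = (a%:~R)%:P * 'X + (c%:~R)%:P.
Proof. by rewrite -mul_polyC rmorphD rmorphM /= !map_polyC map_polyX. Qed.
Lemma im_lin2 (a b c : int) :
  im (a *: 'X^2 + b *: 'X + c%:P) = (a%:~R)%:P * 'X^2 + (b%:~R)%:P * 'X + (c%:~R)%:P.
Proof. by rewrite -!mul_polyC !rmorphD !rmorphM /= !map_polyC !map_polyX expr2. Qed.

Lemma HR N : eqN N (phi N rhs12)
  ((9%:R * (1 + 'X) * phi N sgeom + 3%:R) * phi N Psi_neg
   - (4%:R * 'X + 8%:R) * phi N Psi_neg ^+ 3
   - (12%:R * 'X ^+ 2 + 12%:R * 'X + 3%:R) * phi N Psi_neg ^+ 5).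
Proof.
rewrite /rhs12.
apply: eqN_trans (phi_ssub _ _ _) _; apply: eqN_sub.
  apply: eqN_trans (phi_ssub _ _ _) _; apply: eqN_sub.
    apply: eqN_trans (phi_smul _ _ _) _; apply: eqN_mul; last by apply: eqN_refl.
    apply: eqN_trans (phi_sadd _ _ _) _; apply: eqN_add; last first.
      apply: eqN_trans (phi_sconst _ _) _; apply: eqN_eq.
      by rewrite rmorph_nat.
    apply: eqN_trans (phi_sscale _ _ _) _; rewrite -mulrA; apply: eqN_mul.
      by apply: eqN_eq; rewrite rmorph_nat.
    apply: eqN_trans (phi_smul _ _ _) _; apply: eqN_mul; last by apply: eqN_refl.
    apply: eqN_trans (phi_spoly _ _) _; apply: eqN_eq.
    by rewrite rmorphD rmorph1 /= map_polyX.
  apply: eqN_trans (phi_smul _ _ _) _; apply: eqN_mul; last by apply: phi_spow.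
  apply: eqN_trans (phi_spoly _ _) _; apply: eqN_eq.
  by rewrite im_lin1 !rmorph_nat.
apply: eqN_trans (phi_smul _ _ _) _; apply: eqN_mul; last by apply: phi_spow.
apply: eqN_trans (phi_spoly _ _) _; apply: eqN_eq.
by rewrite im_lin2 !rmorph_nat.
Qed.

Theorem theorem12p2 : forall n : nat, (central_binom n = rhs12 n %[mod 27])%Z.
Proof.
move=> n.
pose G := phi n sgeom. pose P : {poly Z27} := im (Qp n.+1). pose R := phi n rhs12. pose Cm : {poly Z27} := im (cpol n).
have hG : small n ((1 - 'X) * G - 1) := HG n.
have hP : eqN n (phi n Psi_neg) P := HP n.
case: (HPrel n) => e he.
have hR' : eqN n R ((9%:R * (1 + 'X) * G + 3%:R) * P - (4%:R * 'X + 8%:R) * P ^+ 3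
    - (12%:R * 'X ^+ 2 + 12%:R * 'X + 3%:R) * P ^+ 5).
  apply: eqN_trans (HR n) _.
  apply: eqN_sub; [apply: eqN_sub|]; apply: eqN_mul;
    (try apply: eqN_refl); (try apply: eqN_exp); exact: hP.
have K := key _ 'X e G P R. cbv zeta in K.
have hw : small n ((1 - 'X) ^+ 5 * ((1 - 4%:R * 'X) * R ^+ 2 - 1)).
  have h27 : (27%:R : {poly Z27}) = 0 by rewrite -polyC_natr z27.
  rewrite K h27 mul0r add0r.
  apply: smallMl; apply: smallD; first by apply: smallMr; exact: he.
  apply: smallMr; apply: smallMl.
  apply: smallD; last by apply: smallMl; exact: hR'.
  apply: smallMl; apply: smallB; last by apply: smallMr; apply: smallMl; exact: he.
  by apply: smallB; apply: smallMl; [exact: hG | exact: he].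
have hw0 : 1 * ((1 - 'X) ^+ 5 : {poly Z27})`_0 = 1.
  by rewrite -horner_coef0 !hornerE subr0 expr1n.
have hRR := small_cancel n _ _ 1 hw0 hw.
have hCC := HC n.
have hd : small n ((1 - 4%:R * 'X) * ((Cm - R) * (Cm + R))).
  have -> : (1 - 4%:R * 'X) * ((Cm - R) * (Cm + R)) =
     ((1 - 4%:R * 'X) * Cm ^+ 2 - 1) - ((1 - 4%:R * 'X) * R ^+ 2 - 1).
    by ring.
  by apply: smallB.
have hu0 : 1 * ((1 - 4%:R * 'X) : {poly Z27})`_0 = 1.
  by rewrite -horner_coef0 !hornerE subr0.
have hd2 := small_cancel n _ _ 1 hu0 hd.
have hC0 : Cm`_0 = 1 by rewrite coef_map cpol_coef.
have hG0 : G`_0 = 1 by rewrite phi_coef.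
have hP0 : P`_0 = 1 by rewrite coef_map /= Qp_coef0.
have hR0 : R`_0 = 1.
  have := hR' 0%N (leq0n n); rewrite coefB => /eqP; rewrite subr_eq0 => /eqP ->.
  rewrite !(coefB, coefD, coef0M, exprS, expr0, coef1, coefX, coefMn, hG0, hP0) /=; by apply: val_inj.
have hs0 : 14%:R * (Cm + R)`_0 = 1 by rewrite coefD hC0 hR0; apply: val_inj.
have hd3 : small n (Cm - R).
  by apply: (small_cancel n (Cm + R) _ 14%:R hs0); rewrite mulrC.
have := hd3 n (leqnn n); rewrite coefB coef_map phi_coef // cpol_coef // => /eqP.
rewrite subr_eq0 => /eqP h.
exact: final_step.
Qed.
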